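(* Let $\succ$ be an admissible ordering on ground literals, extended to ground clauses by its multiset extension. Let $C_i = A_i \lor D_i$ ($1\le i\le n$) be ground clauses such that the atom $A_i$ is strictly $\succ$-maximal in $C_i$, and let $C=\neg A_1\lor\dots\lor\neg A_n\lor D$ be a ground clause. Consider the inference (SRes) with side premises $C_1,\dots,C_n$, main premise $C$ and conclusion $D_1\lor\dots\lor D_n\lor D$. Let $I\subseteq\{1,\dots,n\}$ be nonempty and let $C_p=\bigvee_{i\in I}D_i\lor\bigvee_{j\notin I}\neg A_j\lor D$ (the conclusion of the corresponding partial inference resolving only the literals $\neg A_i$, $i\in I$). Then for every set $N$ of ground clauses, the SRes inference above is redundant with respect to $N\cup\{C_p\}$.
   Context: An ordering $\succ$ on literals is admissible if it is well-founded and total on ground literals and liftable, $\neg A\succ A$ for every ground atom $A$, and $B\succ A$ implies $B\succ\neg A$ for ground atoms $A,B$. A literal $L$ is strictly $\succ$-maximal in a ground clause $C$ if $L\succ L'$ for every other literal occurrence $L'$ in $C$. For a set $N$ of ground clauses, a ground inference with side premises $C_1,\dots,C_n$, main premise $C$ and conclusion $E$ is redundant with respect to $N$ if there are finitely many clauses in $N$, each strictly smaller than $C$ (in the multiset extension of $\succ$), which together with $C_1,\dots,C_n$ logically entail $E$. *)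

(* Defs.v *)
From Stdlib Require Import List Permutation Relations Wellfounded Arith.
Import ListNotations.
Set Implicit Arguments.

Section Defs.
Variable Atom : Type.

Inductive lit : Type := Pos (a : Atom) | Neg (a : Atom).

(* Ground clauses: finite multisets of literals, represented by lists
   (order is irrelevant; all notions below are invariant under Permutation). *)
Definition clause := list lit.

Variable gt : lit -> lit -> Prop.

(* Admissible ordering on ground literals (liftability is vacuous in the ground setting). *)
Definition admissible : Prop :=
  well_founded (fun x y => gt y x) /\
  (forall x y z, gt x y -> gt y z -> gt x z) /\
  (forall x, ~ gt x x) /\
  (forall x y, x <> y -> gt x y \/ gt y x) /\
  (forall a, gt (Neg a) (Pos a)) /\
  (forall a b, gt (Pos b) (Pos a) -> gt (Pos b) (Neg a)).

Definition clause_gt (M M' : clause) : Prop :=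
  exists Z X Y : list lit,
    Permutation M (Z ++ X) /\ Permutation M' (Z ++ Y) /\ X <> [] /\
    (forall y, In y Y -> exists x, In x X /\ gt x y).

Definition lit_true (I : Atom -> bool) (l : lit) : Prop :=
  match l with Pos a => I a = true | Neg a => I a = false end.

Definition clause_true (I : Atom -> bool) (c : clause) : Prop :=
  exists l, In l c /\ lit_true I l.

Definition entails (Ps : list clause) (E : clause) : Prop :=
  forall I : Atom -> bool, (forall c, In c Ps -> clause_true I c) -> clause_true I E.

Definition redundant_inf (N : clause -> Prop) (sides : list clause) (main concl : clause) : Prop :=
  exists Ns : list clause,
    (forall c, In c Ns -> N c) /\
    (forall c, In c Ns -> clause_gt main c) /\
    entails (sides ++ Ns) concl.
End Defs.

Arguments Pos {Atom} a.
Arguments Neg {Atom} a.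

(* Main.v *)
Require Import Defs.
From Stdlib Require Import List Permutation Arith Lia.
Import ListNotations.

Lemma split_perm {T : Type} (I : nat -> bool) (f g : nat -> list T) (s : list nat) :
  Permutation (concat (map (fun i => if I i then f i else g i) s))
    (concat (map (fun i => if I i then [] else g i) s) ++
     concat (map (fun i => if I i then f i else []) s)).
Proof.
  induction s as [|a s IH]; simpl; [constructor|].
  destruct (I a); simpl.
  - eapply perm_trans. apply Permutation_app_head. exact IH.
    rewrite !app_assoc. apply Permutation_app_tail. apply Permutation_app_comm.
  - rewrite <- app_assoc. apply Permutation_app_head. exact IH.
Qed.

Lemma map_concat_single {T : Type} (h : nat -> T) (s : list nat) :
  map h s = concat (map (fun i => [h i]) s).
Proof. induction s; simpl; f_equal; auto. Qed.

Theorem mainTheorem2 (Atom : Type) (gt : lit Atom -> lit Atom -> Prop)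
  (Hadm : admissible gt)
  (n : nat) (A : nat -> Atom) (Ds : nat -> clause Atom) (D : clause Atom)
  (Hmax : forall i, i < n -> forall l, In l (Ds i) -> gt (Pos (A i)) l)
  (I : nat -> bool) (HI : exists i, i < n /\ I i = true)
  (N : clause Atom -> Prop) :
  let sides := map (fun i => Pos (A i) :: Ds i) (seq 0 n) in
  let C := map (fun i => Neg (A i)) (seq 0 n) ++ D in
  let concl := concat (map Ds (seq 0 n)) ++ D in
  let Cp := concat (map (fun i => if I i then Ds i else [Neg (A i)]) (seq 0 n)) ++ D in
  redundant_inf gt (fun c => N c \/ c = Cp) sides C concl.
Proof.
  intros sides C concl Cp.
  destruct Hadm as (_ & Htr & _ & _ & Hneg & _).
  exists [Cp]. split; [|split].
  - intros c [<-|[]]. right; reflexivity.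
  - intros c [<-|[]].
    set (s := seq 0 n).
    exists (D ++ concat (map (fun i => if I i then [] else [Neg (A i)]) s)),
           (concat (map (fun i => if I i then [Neg (A i)] else []) s)),
           (concat (map (fun i => if I i then Ds i else []) s)).
    split; [|split; [|split]].
    + unfold C. fold s. rewrite (map_concat_single (fun i => Neg (A i))).
      eapply perm_trans. apply Permutation_app_comm.
      rewrite <- app_assoc. apply Permutation_app_head.
      pose proof (split_perm I (fun i => [Neg (A i)]) (fun i => [Neg (A i)]) s) as P.
      simpl in P. eapply perm_trans; [|exact P].
      apply Permutation_refl'. f_equal. apply map_ext. intro i. destruct (I i); reflexivity.
    + unfold Cp. fold s.
      eapply perm_trans. apply Permutation_app_comm.
      rewrite <- app_assoc. apply Permutation_app_head.
      apply split_perm.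
    + destruct HI as [i [Hi HIi]].
      assert (Hin : In (Neg (A i)) (concat (map (fun i => if I i then [Neg (A i)] else []) s))).
      { apply in_concat. exists [Neg (A i)]. split; [|left; reflexivity].
        apply in_map_iff. exists i. rewrite HIi. split; [reflexivity|].
        unfold s. apply in_seq. lia. }
      intro E. rewrite E in Hin. destruct Hin.
    + intros y Hy. apply in_concat in Hy as [l [Hl Hyl]].
      apply in_map_iff in Hl as [i [Ei Hi]]. unfold s in Hi. apply in_seq in Hi.
      destruct (I i) eqn:HIi; subst l; [|destruct Hyl].
      exists (Neg (A i)). split.
      * apply in_concat. exists [Neg (A i)]. split; [|left; reflexivity].
        apply in_map_iff. exists i. rewrite HIi. split; [reflexivity|].
        unfold s. apply in_seq. lia.
      * eapply Htr. apply Hneg. apply Hmax; [lia|exact Hyl].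
  - intros v Hv.
    assert (HCp : clause_true v Cp) by (apply Hv; apply in_or_app; right; left; reflexivity).
    destruct HCp as [l [Hl Hlt]]. unfold Cp in Hl.
    apply in_app_or in Hl as [Hl|Hl].
    + apply in_concat in Hl as [m [Hm Hlm]].
      apply in_map_iff in Hm as [i [Ei Hi]].
      destruct (I i).
      * exists l. split; [|exact Hlt]. apply in_or_app; left.
        apply in_concat. exists (Ds i). split; [apply in_map; exact Hi|congruence].
      * subst m. destruct Hlm as [<-|[]]. simpl in Hlt.
        assert (Hs : clause_true v (Pos (A i) :: Ds i)).
        { apply Hv. apply in_or_app; left. unfold sides. apply in_map_iff. eauto. }
        destruct Hs as [l' [[<-|Hl'] Ht']].
        -- simpl in Ht'. congruence.
        -- exists l'. split; [|exact Ht']. apply in_or_app; left.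
           apply in_concat. exists (Ds i). split; [apply in_map; exact Hi|exact Hl'].
    + exists l. split; [apply in_or_app; right; exact Hl|exact Hlt].
Qed.
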